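(* Let $X$ be a nontrivial real Hausdorff locally convex space and let $g\in\Gamma(X)$ be sublinear. For $x^{\ast}\in X^{\ast}$ set $L_{x^{\ast}}:=\{x\in X: g(x)=\langle x,x^{\ast}\rangle \text{ and } g(-x)=-\langle x,x^{\ast}\rangle\}$. Then: (a) For every $x^{\ast}\in X^{\ast}$, $L_{x^{\ast}}$ is a closed linear subspace of $X$, $$L_{x^{\ast}}=\{x\in X: g(x)\le\langle x,x^{\ast}\rangle,\ g(-x)\le-\langle x,x^{\ast}\rangle\}=[\partial g(0)-x^{\ast}]^{\perp},$$ and $g(x+u)=g(x)+\langle u,x^{\ast}\rangle$ for all $x\in X$ and $u\in L_{x^{\ast}}$. (b) If $u^{\ast}\in\partial g(0)$, then $L_{u^{\ast}}=[\partial g(0)-\partial g(0)]^{\perp}$. Consequently, $L_{x^{\ast}}\subset L_{u^{\ast}}$ for all $x^{\ast}\in X^{\ast}$ and $u^{\ast}\in\partial g(0)$; in particular $L_{u^{\ast}}=L_{v^{\ast}}$ for all $u^{\ast},v^{\ast}\in\partial g(0)$.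
   Context: $X^{\ast}$ is the topological dual of $X$ (weak$^{\ast}$ topology), $\langle x,x^{\ast}\rangle:=x^{\ast}(x)$. $\Gamma(X)$ is the set of proper lower semicontinuous convex functions $X\to\mathbb{R}\cup\{\pm\infty\}$. $\partial g(0)=\{x^{\ast}\in X^{\ast}:\langle x',x^{\ast}\rangle\le g(x')\ \forall x'\in X\}$. For $B\subset X^{\ast}$, $B^{\perp}=\{x\in X:\langle x,x^{\ast}\rangle=0\ \forall x^{\ast}\in B\}$; $\partial g(0)-x^{\ast}$ and $\partial g(0)-\partial g(0)$ are algebraic (Minkowski) differences. *)

(* Defs.v *)
From HB Require Import structures.
From mathcomp Require Import all_boot all_order all_algebra.
From mathcomp Require Import all_classical all_reals all_analysis.
Set Implicit Arguments. Unset Strict Implicit. Unset Printing Implicit Defensive.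
Import Order.TTheory GRing.Theory Num.Theory numFieldTopology.Exports numFieldNormedType.Exports.
Local Open Scope classical_set_scope.
Local Open Scope ring_scope.

Section defs.
Context {R : realType} {X : tvsType R}.

(* topological dual X^* : continuous linear functionals X -> R;
   <x, x^*> is written f x *)
Definition dual_space : set (X -> R) :=
  [set f | (forall (a : R) (x y : X), f (a *: x + y) = a * f x + f y)
           /\ continuous (fun x : X => f x)].

Definition econvex (g : X -> \bar R) : Prop :=
  forall (x y : X) (t : R), 0 < t < 1 ->
    (g ((1 - t) *: x + t *: y)%R <= (1 - t)%:E * g x + t%:E * g y)%E.

Definition eproper (g : X -> \bar R) : Prop :=
  (forall x, g x != -oo%E) /\ (exists x, (g x < +oo)%E).

Definition Gamma (g : X -> \bar R) : Prop :=
  eproper g /\ lower_semicontinuous g /\ econvex g.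

Definition sublinear (g : X -> \bar R) : Prop :=
  g 0 = 0%E /\
  (forall (t : R) (x : X), 0 < t -> g (t *: x) = (t%:E * g x)%E) /\
  (forall x y : X, (g (x + y)%R <= g x + g y)%E).

Definition subdiff0 (g : X -> \bar R) : set (X -> R) :=
  [set f | dual_space f /\ forall x', ((f x')%:E <= g x')%E].

Definition fdiff (A B : set (X -> R)) : set (X -> R) :=
  [set h | exists a b, A a /\ B b /\ h = (fun x => a x - b x)].

Definition perp (B : set (X -> R)) : set X :=
  [set x | forall f, B f -> f x = 0].

Definition Lset (g : X -> \bar R) (f : X -> R) : set X :=
  [set x | g x = (f x)%:E /\ g (- x) = (- f x)%:E].

Definition lin_subspace (L : set X) : Prop :=
  L 0 /\ (forall x y, L x -> L y -> L (x + y)) /\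
  (forall (a : R) x, L x -> L (a *: x)).

End defs.

(* Main.v *)
Require Import Defs.
From HB Require Import structures.
From mathcomp Require Import all_boot all_order all_algebra.
From mathcomp Require Import all_classical all_reals all_analysis.
From mathcomp Require Import lra.
Import Order.TTheory GRing.Theory Num.Theory numFieldTopology.Exports numFieldNormedType.Exports.
Local Open Scope classical_set_scope.
Local Open Scope ring_scope.

Set Implicit Arguments. Unset Strict Implicit. Unset Printing Implicit Defensive.

Ltac unimg := rewrite /image /mkset /=.

Section A.
Context {R : realType} {X : lmodType R}.

Definition rsub (q : X -> R) := (forall t x, 0 < t -> q (t *: x) = t * q x) /\
  (forall x y, q (x + y) <= q x + q y).

Lemma rsub0 q : rsub q -> q 0 = 0.
Proof.
move=> [hZ _]; have := hZ 2 0 (ltr0Sn _ 1); rewrite scaler0 => h; lra.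
Qed.

Lemma rsubZ0 q t x : rsub q -> 0 <= t -> q (t *: x) = t * q x.
Proof.
move=> hq; rewrite le_eqVlt => /orP[/eqP <-|t0]; last by apply hq.1.
by rewrite scale0r mul0r rsub0.
Qed.

Lemma rsubN q x : rsub q -> - q (- x) <= q x.
Proof.
move=> hq; have := hq.2 x (- x); rewrite subrr rsub0 //.
by rewrite -lerBlDr sub0r.
Qed.

Lemma inf_rsub (S : X -> set R) :
  (forall x, S x !=set0) -> (forall x, has_lbound (S x)) ->
  (forall t x e, 0 < t -> S x e -> S (t *: x) (t * e)) ->
  (forall x y e1 e2, S x e1 -> S y e2 -> exists2 e, S (x + y) e & e <= e1 + e2) ->
  rsub (fun x => inf (S x)).
Proof.
move=> ne lb hZ hD; split.
- move=> t x t0; apply/eqP; rewrite eq_le; apply/andP; split.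
  + rewrite -ler_pdivrMl //; apply: lb_le_inf => // e Se.
    rewrite ler_pdivrMl //; apply: ge_inf => //; exact: hZ.
  + apply: lb_le_inf => // e Se.
    rewrite -ler_pdivlMl //; apply: ge_inf => //.
    have ti : 0 < t^-1 by rewrite invr_gt0.
    have := hZ t^-1 _ _ ti Se.
    by rewrite scalerA mulVf ?gt_eqF // scale1r.
- move=> x y; rewrite -inf_sumE; last 2 first.
    by split; [exact: ne|exact: lb].
    by split; [exact: ne|exact: lb].
  apply: lb_le_inf.
    by case: (ne x) => a Sa; case: (ne y) => b Sb; exists (a + b); exists a => //; exists b.
  move=> _ [a Sa [b Sb <-]]; have [e Se le] := hD _ _ _ _ Sa Sb.
  apply: le_trans le; exact: ge_inf.
Qed.


Definition Qd (q : X -> R) (y x : X) :=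
  inf [set q (x + t *: y) - t * q y | t in [set t : R | 0 <= t]].

Lemma Qd_rsub q y : rsub q -> rsub (Qd q y).
Proof.
move=> hq; apply: inf_rsub.
- by move=> x; exists (q (x + 0 *: y) - 0 * q y); unimg; exists 0.
- move=> x; exists (- q (- x)) => _ [t /= t0 <-].
  have := hq.2 (x + t *: y) (- x).
  rewrite addrC addKr rsubZ0 //; lra.
- move=> s x _ s0 [t /= t0 <-]; unimg; exists (s * t); first by rewrite mulr_ge0 // ltW.
  by have := hq.1 s (x + t *: y) s0; rewrite scalerDr scalerA => ->; rewrite mulrBr mulrA.
- move=> x x' _ _ [t1 /= t1g <-] [t2 /= t2g <-].
  exists (q (x + x' + (t1 + t2) *: y) - (t1 + t2) * q y).
    by unimg; exists (t1 + t2) => //; rewrite addr_ge0.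
  have := hq.2 (x + t1 *: y) (x' + t2 *: y).
  have -> : x + t1 *: y + (x' + t2 *: y) = x + x' + (t1 + t2) *: y.
    by rewrite scalerDl addrACA.
  rewrite mulrDl; lra.
Qed.

Lemma Qd_lbound q y x : rsub q -> has_lbound
  [set q (x + t *: y) - t * q y | t in [set t : R | 0 <= t]].
Proof.
move=> hq; exists (- q (- x)) => _ [t /= t0 <-].
have := hq.2 (x + t *: y) (- x).
rewrite addrC addKr rsubZ0 //; lra.
Qed.

Lemma Qd_le q y x : rsub q -> Qd q y x <= q x.
Proof.
move=> hq; rewrite /Qd; have -> : q x = q (x + 0 *: y) - 0 * q y.
  by rewrite scale0r addr0 mul0r subr0.
by apply: ge_inf; [exact: Qd_lbound|unimg; exists 0].
Qed.

Lemma Qd_neg q y : rsub q -> Qd q y (- y) <= - q y.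
Proof.
move=> hq; rewrite /Qd; have -> : - q y = q (- y + 1 *: y) - 1 * q y.
  by rewrite scale1r addNr rsub0 // mul1r sub0r.
by apply: ge_inf; [exact: Qd_lbound|unimg; exists 1].
Qed.

Definition rlin (h : X -> R) := forall a x y, h (a *: x + y) = a * h x + h y.

Lemma min_linear q : rsub q ->
  (forall q', rsub q' -> (forall x, q' x <= q x) -> forall x, q x <= q' x) ->
  rlin q.
Proof.
move=> hq hmin.
have qN y : q (- y) = - q y.
  have := hmin _ (Qd_rsub y hq) (fun x => Qd_le y x hq) (- y).
  have := Qd_neg y hq; have := rsubN y hq; lra.
have qD x y : q (x + y) = q x + q y.
  have := hq.2 x y; have := hq.2 (- x) (- y).
  rewrite -opprD !qN; lra.
have qZ a x : q (a *: x) = a * q x.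
  have [a0|a0|->] := ltgtP a 0; last by rewrite scale0r mul0r rsub0.
  - have := hq.1 (- a) x; rewrite oppr_gt0 => /(_ a0).
    by rewrite scaleNr qN mulNr => /eqP; rewrite eqr_opp => /eqP.
  - exact: hq.1.
by move=> a x y; rewrite qD qZ.
Qed.

Lemma hahn_banach q0 : rsub q0 -> exists h, rlin h /\ forall x, h x <= q0 x.
Proof.
move=> hq0.
pose T := {q : X -> R | rsub q /\ forall x, q x <= q0 x}.
pose t0 : T := exist _ q0 (conj hq0 (fun x => lexx _)).
pose Rl (s t : T) : bool := `[< forall x, sval t x <= sval s x >].
have [| | |t tmax] := @ZL_preorder T t0 Rl.
- by move=> t; apply/asboolP => x.
- move=> a b c /asboolP ab /asboolP bc; apply/asboolP => x.
  exact: le_trans (bc x) (ab x).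
- move=> A Atot.
  have [[s0 As0]|A0] := pselect (exists s, A s); last first.
    by exists t0 => s As; exfalso; apply: A0; exists s.
  pose S x := [set sval s x | s in A].
  have Slb x : has_lbound (S x).
    exists (- q0 (- x)) => _ [s As <-]; case: s As => q [hq hqle] _ /=.
    have := rsubN x hq; have := hqle (- x); lra.
  have Sne x : S x !=set0 by exists (sval s0 x); exists s0.
  have hm : rsub (fun x => inf (S x)).
    apply: inf_rsub => //.
    - move=> t x _ t0p [s As <-]; exists s => //.
      by case: s As => q [hq _] _ /=; rewrite hq.1.
    - move=> x y _ _ [s1 As1 <-] [s2 As2 <-].
      have [/asboolP h12|/asboolP h21] := Atot _ _ As1 As2.
      + exists (sval s2 (x + y)); first by exists s2.
        case: s2 As2 h12 => q [hq _] _ /= h12.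
        have := hq.2 x y; have := h12 x; lra.
      + exists (sval s1 (x + y)); first by exists s1.
        case: s1 As1 h21 => q [hq _] _ /= h21.
        have := hq.2 x y; have := h21 y; lra.
  have hmle x : inf (S x) <= q0 x.
    apply: le_trans (proj2 (proj2_sig s0) x).
    by apply: ge_inf => //; exists s0.
  exists (exist _ (fun x => inf (S x)) (conj hm hmle)) => s As.
  by apply/asboolP => x /=; apply: ge_inf => //; exists s.
- exists (sval t); split; last by case: t tmax => q [] .
  apply: min_linear; first by case: t tmax => q [].
  move=> q' hq' le'.
  have hle0 x : q' x <= q0 x.
    by apply: le_trans (le' x) _; case: t tmax {le'} => q [].
  have /asboolP := tmax (exist _ q' (conj hq' hle0)) (asboolT le').
  by [].
Qed.

End A.

Section C.
Context {R : realType} {X : tvsType R}.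

Definition cvx (V : set X) := forall a b l, V a -> V b -> 0 <= l -> l <= 1 ->
  V (l *: a + (1 - l) *: b).

Lemma comb (V : set X) a b (al be : R) : cvx V -> V a -> V b -> 0 <= al -> 0 <= be ->
  exists2 w, V w & al *: a + be *: b = (al + be) *: w.
Proof.
move=> cV Va Vb a0 b0.
have [s0|sn0] := eqVneq (al + be) 0.
  have al0 : al = 0 by lra.
  have be0 : be = 0 by lra.
  by exists a => //; rewrite al0 be0 addr0 !scale0r addr0.
have sp : 0 < al + be by rewrite lt_def sn0 addr_ge0.
exists ((al / (al + be)) *: a + (1 - al / (al + be)) *: b).
  apply: cV => //.
    by apply: divr_ge0 => //; apply: ltW.
  by rewrite ler_pdivrMr // mul1r lerDl.
have -> : 1 - al / (al + be) = be / (al + be).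
  by rewrite -(divff sn0) -mulrBl addrC addKr.
by rewrite scalerDr !scalerA !mulrA !(mulrC (al + be)) -!mulrA divff // !mulr1.
Qed.

Lemma good_nbhd (W : set X) : nbhs 0 W -> exists V : set X,
  [/\ nbhs 0 V, V `<=` W, (forall v, V v -> V (- v)) & cvx V].
Proof.
move=> nW.
have [U [nU UW cU]] : exists U : set X, [/\ nbhs 0 U, U `<=` W & cvx U].
  have [B Bc [Bo Bb]] := @locally_convex R X.
  have [U [BU U0] UW] := Bb 0 W nW.
  exists U; split => //.
    by apply: open_nbhs_nbhs; split => //; exact: Bo.
  move=> a b l Ua Ub l0 l1.
  have := Bc U (mem_set BU) a b (Itv01 l0 l1) (mem_set Ua) (mem_set Ub).
  by rewrite inE; exact.
exists (U `&` [set v | U (- v)]); split.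
- apply: filterI => //.
  apply: filterS (nbhs0N nU) => v [u Uu <-]; by rewrite /= opprK.
- by move=> v [] /UW.
- by move=> v [] Uv Unv; split => //=; rewrite opprK.
- move=> a b l [Ua Una] [Ub Unb] l0 l1; split; first exact: cU.
  by rewrite /= opprD -!scalerN; apply: cU.
Qed.

Lemma absorb (V : set X) : nbhs 0 V -> forall x : X,
  exists2 s : R, 0 < s & exists2 v, V v & x = s *: v.
Proof.
move=> nV x.
have := @scale_continuous R X (0, x) V; rewrite /= scale0r => /(_ nV) [] /= B [B1 B2] BU.
move/nbhs_ballP: B1 => [e /= e0 eB].
have e20 : 0 < e / 2 by lra.
have he : ball (0 : R^o) e (e / 2).
  by rewrite /ball /= sub0r normrN gtr0_norm //; lra.
have := BU (e / 2, x); rewrite /= => /(_ (conj (eB _ he) (nbhs_singleton B2))) Vex.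
exists (e / 2)^-1; first by rewrite invr_gt0.
exists ((e / 2) *: x) => //.
by rewrite scalerA mulVf ?scale1r // gt_eqF.
Qed.

End C.

Section K.
Context {R : realType} {X : tvsType R} (g : X -> \bar R) (hg : Gamma g) (sg : sublinear g).

Let g0 : g 0 = 0%E := sg.1.
Let gZ t x : 0 < t -> g (t *: x) = (t%:E * g x)%E. Proof. exact: sg.2.1. Qed.
Let gD x y : (g (x + y)%R <= g x + g y)%E. Proof. exact: sg.2.2. Qed.
Let gNoo x : g x != -oo%E. Proof. exact: hg.1.1. Qed.

Lemma glow (V : set X) (hV : forall w, V w -> ((-1)%:E < g w)%E) w t c :
  V w -> 0 <= t -> g (t *: w) = c%:E -> - t <= c.
Proof.
move=> Vw; rewrite le_eqVlt => /orP[/eqP <-|tp].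
  by rewrite scale0r g0 => -[<-]; rewrite oppr0.
rewrite gZ //; have := hV w Vw; case: (g w) => [d| |] //=.
  by rewrite lte_fin -EFinM => d1 [<-]; nra.
by rewrite mulry gtr0_sg // mul1e.
Qed.

Lemma key_aux x0 r (N : set X) : nbhs x0 N -> (forall y, N y -> (r%:E < g y)%E) ->
  exists h, subdiff0 g h /\ r <= h x0.
Proof.
move=> nN hN.
have h01 : ((-1)%:E < g (0%R : X))%E by rewrite g0 lte_fin ltrN10.
have [W0 nW0 hW0] := hg.2.1 (0%R : X) (-1) h01.
pose N' := [set v | N (x0 + v)].
have nN' : nbhs 0 N'.
  have := nbhsB (- x0) nN; rewrite addNr; apply: filterS => _ [y Ny <-].
  by rewrite /N' /= addNKr.
have [V [nV VW sV cV]] := good_nbhd (filterI nW0 nN').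
have V0 : V 0 by exact: nbhs_singleton.
have hV w : V w -> ((-1)%:E < g w)%E by move=> /VW [] /hW0.
have [s0 s0p [v0 Vv0 x0E]] := absorb nV x0.
pose rho := 1 + `|r| + s0.
have rho1 : 1 <= rho by rewrite /rho; have := normr_ge0 r; lra.
have lowb x s v' t v c : 0 < s -> V v' -> x = s *: v' -> 0 <= t -> V v ->
    g (x - t *: v) = c%:E -> - (s + t) <= c.
  move=> sp Vv' -> t0 Vv gE.
  have [w Vw wE] := comb cV Vv' (sV _ Vv) (ltW sp) t0.
  apply: (glow hV Vw); first by rewrite addr_ge0 // ltW.
  by rewrite -wE scalerN.
pose S x := [set e | exists t v c, [/\ 0 <= t, V v, g (x - t *: v) = c%:E & e = c + rho * t]].
have Sne x : S x !=set0.
  have [s sp [v Vv xE]] := absorb nV x.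
  exists (0 + rho * s); exists s, v, 0; split => //; first exact: ltW.
  by rewrite xE subrr.
have Slb x : has_lbound (S x).
  have [s sp [v' Vv' xE]] := absorb nV x.
  exists (- s) => _ [t [v [c [t0 Vv gE ->]]]].
  have := lowb _ _ _ _ _ _ sp Vv' xE t0 Vv gE; nra.
pose P x := inf (S x).
have Prsub : rsub P.
  apply: inf_rsub => //.
  - move=> s x _ sp [t [v [c [t0 Vv gE ->]]]].
    exists (s * t), v, (s * c); split => //; first by rewrite mulr_ge0 // ltW.
      by rewrite -scalerA -scalerBr gZ // gE -EFinM.
    by rewrite mulrDr mulrCA.
  - move=> x y _ _ [t1 [v1 [c1 [t10 Vv1 gE1 ->]]]] [t2 [v2 [c2 [t20 Vv2 gE2 ->]]]].
    have [w Vw wE] := comb cV Vv1 Vv2 t10 t20.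
    have hsum : x + y - (t1 + t2) *: w = (x - t1 *: v1) + (y - t2 *: v2).
      by rewrite -wE opprD addrACA.
    have := gD (x - t1 *: v1) (y - t2 *: v2); rewrite -hsum gE1 gE2 -EFinD.
    move: (gNoo (x + y - (t1 + t2) *: w)).
    case E: (g (x + y - (t1 + t2) *: w)) => [c| |] //= _;
    rewrite lee_fin => cle.
    exists (c + rho * (t1 + t2)); last by rewrite mulrDr; lra.
    by exists (t1 + t2), w, c; split => //; lra.

have PleS x e : S x e -> P x <= e by move=> Se; exact: ge_inf.
have Pg x : ((P x)%:E <= g x)%E.
  move: (gNoo x); case E : (g x) => [c| |] //= _; last by rewrite leey.
  rewrite lee_fin; apply: PleS; exists 0, 0, c; split => //.
    by rewrite scaler0 subr0.
  by rewrite mulr0 addr0.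
have PV v : V v -> P v <= rho.
  move=> Vv; apply: PleS; exists 1, v, 0; split => //.
    by rewrite scale1r subrr.
  by rewrite mulr1 add0r.
have Px0 : r <= P x0.
  apply: lb_le_inf => // _ [t [v [c [t0 Vv gE ->]]]].
  have [t1|t1] := ltP t 1.
    have t1' : 0 <= 1 - t by lra.
    have [w Vw wE] := comb cV (sV _ Vv) V0 t0 t1'.
    have e1 : t + (1 - t) = 1 by rewrite addrC subrK.
    rewrite e1 scale1r scaler0 addr0 scalerN in wE.
    have := hN (x0 + w) (proj2 (VW _ Vw)).
    rewrite -wE gE lte_fin => rc.
    have : 0 <= rho * t by rewrite mulr_ge0 //; lra.
    lra.
  have := lowb _ _ _ _ _ _ s0p Vv0 x0E t0 Vv gE.
  have := ler_norm r.
  have : 0 <= `|r| * (t - 1) by rewrite mulr_ge0 //; lra.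
  have : 0 <= s0 * (t - 1) by rewrite mulr_ge0 //; lra.
  rewrite /rho; nra.
have [h [hlin hle]] := hahn_banach (Qd_rsub x0 Prsub).
have h0 : h 0 = 0.
  by have := hlin 1 0 0; rewrite scaler0 addr0 mul1r => E; lra.
have hNeg x : h (- x) = - h x.
  by have := hlin (-1) x 0; rewrite !addr0 scaleN1r h0 addr0 mulN1r.
have hP x : h x <= P x := le_trans (hle x) (Qd_le x0 x Prsub).
have hx0 : P x0 <= h x0.
  by have := hle (- x0); have := Qd_neg x0 Prsub; rewrite hNeg; lra.
exists h; split; last lra.
split; last by move=> x'; apply: le_trans (Pg x'); rewrite lee_fin.
split; first exact: hlin.
have hb v : V v -> `|h v| <= rho.
  move=> Vv; rewrite ler_norml; have := hP v; have := hP (- v).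
  have := PV _ Vv; have := PV _ (sV _ Vv); rewrite hNeg; lra.
have rho0 : 0 < rho + 1 by lra.
move=> x; apply/cvgrPdist_lt => e e0.
pose d := e / (rho + 1).
have dpos : 0 < d by rewrite divr_gt0.
have dn0 : d != 0 by rewrite gt_eqF.
apply: filterS (nbhsT x (nbhs0Z dn0 nV)) => _ [_ [v Vv <-] <-].
rewrite /= [x + _]addrC hlin opprD addrCA subrr addr0 normrN normrM gtr0_norm //.
have := hb v Vv; have : d * (rho + 1) = e by rewrite /d mulfVK // gt_eqF.
have : 0 <= `|h v| by [].
nra.
Qed.

End K.

Lemma key (R : realType) (X : tvsType R) (g : X -> \bar R) (hg : Gamma g) (sg : sublinear g)
  x0 r : (r%:E < g x0)%E -> exists h, subdiff0 g h /\ r < h x0.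
Proof.
move=> lt.
have [r' [rr' r'g]] : exists r', r < r' /\ (r'%:E < g x0)%E.
  move: lt; case: (g x0) => [c| |] //.
    rewrite !lte_fin => rc; exists ((r + c) / 2); split; rewrite ?lte_fin; lra.
  by move=> _; exists (r + 1); split; [lra|rewrite ltey].
have [N nN hN] := hg.2.1 x0 r' r'g.
have [h [sh hx]] := key_aux hg sg nN hN.
by exists h; split => //; lra.
Qed.

Unset Implicit Arguments. Set Strict Implicit.

Theorem proposition4 (R : realType) (X : tvsType R)
  (hX : hausdorff_space X) (nontriv : exists x : X, x != 0)
  (g : X -> \bar R) (hg : Gamma g) (sg : sublinear g) :
  (forall f : X -> R, dual_space f ->
     [/\ closed (Lset g f), lin_subspace (Lset g f),
         Lset g f = [set x | (g x <= (f x)%:E)%E /\ (g (- x)%R <= (- f x)%:E)%E],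
         Lset g f = perp (fdiff (subdiff0 g) [set f])
       & forall x u, Lset g f u -> g (x + u)%R = (g x + (f u)%:E)%E])
  /\
  (forall u : X -> R, subdiff0 g u ->
     [/\ Lset g u = perp (fdiff (subdiff0 g) (subdiff0 g)),
         (forall f : X -> R, dual_space f -> Lset g f `<=` Lset g u)
       & forall v : X -> R, subdiff0 g v -> Lset g u = Lset g v]).
Proof.
have g0 : g 0 = 0%E := sg.1.
have gZ t x : 0 < t -> g (t *: x) = (t%:E * g x)%E by exact: sg.2.1.
have gD x y : (g (x + y)%R <= g x + g y)%E by exact: sg.2.2.
have gNoo x : g x != -oo%E by exact: hg.1.1.
have flin (f : X -> R) : dual_space f ->
   [/\ f 0 = 0, forall x, f (- x) = - f x, forall x y, f (x + y) = f x + f y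
     & forall a x, f (a *: x) = a * f x].
  move=> [fl _].
  have f0 : f 0 = 0 by have := fl 1 0 0; rewrite scaler0 addr0 mul1r => E; lra.
  split => //.
  - by move=> x; have := fl (-1) x 0; rewrite !addr0 scaleN1r f0 addr0 mulN1r.
  - by move=> x y; rewrite -[x]scale1r fl mul1r scale1r.
  - by move=> a x; rewrite -[a *: x]addr0 fl f0 addr0.
have Lchar (f : X -> R) : dual_space f ->
    Lset g f = [set x | (g x <= (f x)%:E)%E /\ (g (- x)%R <= (- f x)%:E)%E].
  move=> df; have [f0 fN fD fZ] := flin f df.
  apply/seteqP; split => x /=; first by move=> [-> ->].
  move=> [h1 h2]; have := gD x (- x); rewrite subrr g0.
  move: h1 h2 (gNoo x) (gNoo (- x)).
  case E1: (g x) => [a| |] //; case E2: (g (- x)) => [b| |] //.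
  rewrite !lee_fin => h1 h2 _ _ h3.
  have h4 : 0 <= a + b by rewrite -lee_fin EFinD.
  by rewrite /Lset /= E1 E2; split; congr EFin; lra.
have perpA (f : X -> R) : dual_space f -> Lset g f = perp (fdiff (subdiff0 g) [set f]).
  move=> df; have [f0 fN fD fZ] := flin f df.
  apply/seteqP; split => x.
    move=> [gx gnx] _ [a [b [[da ha] [bf ->]]]] /=; rewrite bf.
    have [_ aN _ _] := flin a da.
    have := ha x; have := ha (- x); rewrite gx gnx aN !lee_fin; lra.
  move=> H; rewrite (Lchar f df) /=.
  have Hh (h : X -> R) : subdiff0 g h -> h x = f x.
    move=> sh; have := H (fun z => h z - f z).
    have /[swap]/[apply] : fdiff (subdiff0 g) [set f] (fun z => h z - f z).
      by exists h, f.
    move=> /eqP; rewrite subr_eq0 => /eqP.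
    by [].
  split; rewrite leNgt; apply/negP => /key => /(_ hg sg) [h [sh hlt]].
    by move: hlt; rewrite Hh //; lra.
  have [_ hN _ _] := flin h sh.1.
  by move: hlt; rewrite hN Hh //; lra.
have perpD (u : X -> R) : subdiff0 g u ->
    perp (fdiff (subdiff0 g) [set u]) = perp (fdiff (subdiff0 g) (subdiff0 g)).
  move=> su; apply/seteqP; split => x H.
    move=> _ [a [b [sa [sb ->]]]] /=.
    have := H (fun z => a z - u z) (ex_intro _ a (ex_intro _ u (conj sa (conj erefl erefl)))).
    have := H (fun z => b z - u z) (ex_intro _ b (ex_intro _ u (conj sb (conj erefl erefl)))).
    rewrite /=; lra.
  move=> _ [a [b [sa [/= -> ->]]]].
  by apply: (H (fun z => a z - u z)); exists a, u.
have perpS (f u : X -> R) : dual_space f -> subdiff0 g u ->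
    perp (fdiff (subdiff0 g) [set f]) `<=` perp (fdiff (subdiff0 g) (subdiff0 g)).
  move=> df su x H _ [a [b [sa [sb ->]]]] /=.
  have := H (fun z => a z - f z) (ex_intro _ a (ex_intro _ f (conj sa (conj erefl erefl)))).
  have := H (fun z => b z - f z) (ex_intro _ b (ex_intro _ f (conj sb (conj erefl erefl)))).
  rewrite /=; lra.
split.
  move=> f df; have [f0 fN fD fZ] := flin f df.
  have L0 : Lset g f 0 by split; rewrite ?oppr0 g0 f0 ?oppr0.
  have LN x : Lset g f x -> Lset g f (- x).
    by move=> [h1 h2]; split; rewrite ?opprK fN // opprK.
  have LP t x : 0 < t -> Lset g f x -> Lset g f (t *: x).
    move=> tp [h1 h2]; split; first by rewrite gZ // h1 fZ EFinM.
    by rewrite -scalerN gZ // h2 fZ -EFinM mulrN.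
  split.
  - rewrite (perpA f df).
    have -> : perp (fdiff (subdiff0 g) [set f]) =
        \bigcap_(h in fdiff (subdiff0 g) [set f]) (h @^-1` [set x | x = 0]).
      by apply/seteqP; split => x H h Fh; apply: H.
    apply: closed_bigI => _ [a [b [[[_ ca] _] [bf ->]]]].
    apply: preimage_closed; last exact: closed_eq.
    move=> x _; apply: continuousB; first exact: ca.
    by rewrite bf; case: df => _; apply.
  - split => //; split.
      move=> x y Lx Ly; rewrite (Lchar f df) /=; move: Lx Ly => [h1 h2] [h3 h4].
      split.
        by apply: (le_trans (gD x y)); rewrite h1 h3 -EFinD fD.
      by rewrite opprD; apply: (le_trans (gD (- x) (- y))); rewrite h2 h4 -EFinD fD opprD.
    move=> a x Lx; have [a0|a0|->] := ltgtP a 0; last by rewrite scale0r.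
      have -> : a *: x = - ((- a) *: x) by rewrite scaleNr opprK.
      by apply: LN; apply: LP => //; lra.
    exact: LP.
  - exact: Lchar.
  - exact: perpA.
  - move=> x u [h1 h2]; apply/eqP; rewrite eq_le; apply/andP; split.
      by rewrite -h1; exact: gD.
    have := gD (x + u) (- u); rewrite addrK h2.
    move: (gNoo x) (gNoo (x + u)); case: (g x) => [a| |] //; case: (g (x + u)) => [b| |] //.
      by rewrite -EFinD !lee_fin => _ _; lra.
    by move=> _ _ _; rewrite leey.
move=> u su; have du := su.1.
have Lu : Lset g u = perp (fdiff (subdiff0 g) (subdiff0 g)).
  by rewrite (perpA u du) perpD.
split => //.
  by move=> f df; rewrite Lu (perpA f df); exact: perpS su.
by move=> v sv; rewrite Lu (perpA v sv.1) perpD.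
Qed.
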